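(* Assume $\operatorname{tr}(C)>0$ and $\theta_0\neq\theta_*$. Let $N\ge1$, $\alpha=\min\Big\{\frac{\|\theta_0-\theta_*\|}{2\sqrt{\operatorname{tr}(C)}\,N^{3/2}},\frac1L\Big\}$ and $\beta\in[0,\min\{N\alpha,1/L\}]$, and run the noisy algorithm with these parameters. Then $$\mathbb{E}f(\theta_N)-f(\theta_* )\le\frac{2L\|\theta_0-\theta_*\|^2}{N^2}+\frac{4\sqrt{\operatorname{tr}(C)}\,\|\theta_0-\theta_*\|}{\sqrt N}.$$
   Context: Let $H\in\mathbb{R}^{d\times d}$ be symmetric positive definite with largest eigenvalue $L$, $q\in\mathbb{R}^d$, $f(\theta)=\frac12\langle\theta,H\theta\rangle-\langle q,\theta\rangle$, $\theta_*=H^{-1}q$. Let $(\varepsilon_n)_{n\ge2}$ be random vectors in $\mathbb{R}^d$ with $\mathbb{E}\varepsilon_n=0$, $\mathbb{E}[\varepsilon_n\varepsilon_m^\top]=0$ for $n\neq m$, and $\mathbb{E}[\varepsilon_n\varepsilon_n^\top]=C$ for all $n$. The noisy algorithm with parameters $\alpha,\beta$: given deterministic $\theta_0$, set $\theta_1=\theta_0$ and for $n\ge1$ $$\theta_{n+1}=\frac{2n}{n+1}\theta_n-\frac{n-1}{n+1}\theta_{n-1}-\frac{1}{n+1}\Big(n(\alpha+\beta)H(\theta_n-\theta_* )-(n-1)\beta H(\theta_{n-1}-\theta_* )-(n\alpha+\beta)\varepsilon_{n+1}\Big).$$ *)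

(* Defs.v *)
From HB Require Import structures.
From mathcomp Require Import all_boot all_order all_algebra.
Set Implicit Arguments. Unset Strict Implicit. Unset Printing Implicit Defensive.
Import Order.TTheory GRing.Theory Num.Theory.
Local Open Scope ring_scope.

Record ExpSpace (R : rcfType) (Omega : Type) := {
  Int : (Omega -> R) -> Prop;
  Ex : (Omega -> R) -> R;
  Int_const : forall c : R, Int (fun _ => c);
  Int_add : forall X Y, Int X -> Int Y -> Int (fun w => X w + Y w);
  Int_scale : forall (c : R) X, Int X -> Int (fun w => c * X w);
  Ex_const : forall c : R, Ex (fun _ => c) = c;
  Ex_add : forall X Y, Int X -> Int Y -> Ex (fun w => X w + Y w) = Ex X + Ex Y;
  Ex_scale : forall (c : R) X, Int X -> Ex (fun w => c * X w) = c * Ex X;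
  Ex_pos : forall X, Int X -> (forall w, 0 <= X w) -> 0 <= Ex X
}.

Definition dotv (R : rcfType) (d : nat) (u v : 'cV[R]_d) : R := (u^T *m v) 0 0.
Definition normv (R : rcfType) (d : nat) (v : 'cV[R]_d) : R := Num.sqrt (dotv v v).

Definition quadf (R : rcfType) (d : nat) (H : 'M[R]_d) (q theta : 'cV[R]_d) : R :=
  2^-1 * dotv theta (H *m theta) - dotv q theta.

Definition thstar (R : rcfType) (d : nat) (H : 'M[R]_d) (q : 'cV[R]_d) : 'cV[R]_d :=
  invmx H *m q.

(* One step: given n >= 1, theta_n, theta_{n-1} and eps_{n+1}, compute theta_{n+1}. *)
Definition noisy_step (R : rcfType) (d : nat) (H : 'M[R]_d) (ts : 'cV[R]_d)
  (alpha beta : R) (n : nat) (tn tn1 e : 'cV[R]_d) : 'cV[R]_d :=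
  ((2 * n%:R) / (n%:R + 1)) *: tn - ((n%:R - 1) / (n%:R + 1)) *: tn1
  - (n%:R + 1)^-1 *: (  (n%:R * (alpha + beta)) *: (H *m (tn - ts))
                      - ((n%:R - 1) * beta) *: (H *m (tn1 - ts))
                      - (n%:R * alpha + beta) *: e).

(* noisy_pair k w = (theta_k(w), theta_{k+1}(w)) *)
Fixpoint noisy_pair (R : rcfType) (d : nat) (Omega : Type) (H : 'M[R]_d)
  (q : 'cV[R]_d) (alpha beta : R) (eps : nat -> Omega -> 'cV[R]_d)
  (theta0 : 'cV[R]_d) (k : nat) (w : Omega) : 'cV[R]_d * 'cV[R]_d :=
  match k with
  | 0 => (theta0, theta0)
  | k'.+1 =>
      let p := noisy_pair H q alpha beta eps theta0 k' w in
      (p.2, noisy_step H (thstar H q) alpha beta k'.+1 p.2 p.1 (eps k'.+2 w))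
  end.

Definition noisy_iter (R : rcfType) (d : nat) (Omega : Type) (H : 'M[R]_d)
  (q : 'cV[R]_d) (alpha beta : R) (eps : nat -> Omega -> 'cV[R]_d)
  (theta0 : 'cV[R]_d) (n : nat) (w : Omega) : 'cV[R]_d :=
  (noisy_pair H q alpha beta eps theta0 n w).1.

(* Main.v *)
Require Import Defs.
From HB Require Import structures.
From mathcomp Require Import all_boot all_order all_algebra.
From mathcomp Require Import complex spectral sesquilinear.
From mathcomp Require Import ring lra.
From Stdlib Require Import FunctionalExtensionality.
Import Order.TTheory GRing.Theory Num.Theory.
Local Open Scope ring_scope.

Set Implicit Arguments. Unset Strict Implicit. Unset Printing Implicit Defensive.

Section Spec.
Variable R : rcfType.
Local Notation C := (R[i]).
Local Notation rc := (real_complex R).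

Lemma rc_real (x : R) : (rc x : C) \is Num.real.
Proof. by apply/complex_realP; exists x. Qed.

Lemma conj_rc (x : R) : Num.conj (rc x : C) = rc x.
Proof. exact: conj_Creal (rc_real x). Qed.

Lemma rayleigh_le n (H : 'M[R]_n) (L : R) :
  H^T = H -> (forall a, eigenvalue H a -> a <= L) ->
  forall y : 'cV[R]_n, dotv y (H *m y) <= L * dotv y y.
Proof.
move=> Hsym HL y.
set Hc : 'M[C]_n := map_mx rc H.
have Hherm : Hc \is hermsymmx.
  apply: realsym_hermsym.
    apply/is_hermitianmxP; rewrite expr0 scale1r map_mx_id // /Hc.
    by rewrite [RHS]map_trmx Hsym.
  by apply/mxOverP => i j; rewrite mxE; exact: rc_real.
have /orthomx_spectralP Hdec := hermitian_normalmx Hherm.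
have Pu := spectral_unitarymx Hc.
set P := spectralmx Hc in Hdec Pu.
set D := spectral_diag Hc in Hdec.
have Dreal := hermitian_spectral_diag_real Hherm.
have Punit : P \in unitmx by exact: unitarymx_unit.
have PHc : P *m Hc = diag_mx D *m P.
  by rewrite {1}Hdec !mulmxA mulmxV // mul1mx.
have Dle : forall j, D 0 j <= rc L.
  move=> j; have /complex_realP [k Dk] : D 0 j \is Num.real.
    by move/mxOverP: Dreal; apply.
  rewrite Dk lecR; apply: HL; rewrite -(eigenvalue_map rc) -/Hc.
  apply/eigenvalueP; exists (row j P).
    rewrite -row_mul PHc; apply: (@eq_trans _ _ (D 0 j *: row j P)); last by rewrite Dk.
    by rewrite mul_diag_mx; apply/rowP => l; rewrite !mxE.
  apply/eqP => Pj0.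
  have := congr1 (fun M : 'M[C]_n => row j M) (mulmxV Punit).
  rewrite /= row_mul Pj0 mul0mx => /rowP /(_ j).
  by rewrite !mxE eqxx /= => /eqP; rewrite eq_sym oner_eq0.
set yc : 'cV[C]_n := map_mx rc y.
set w := P *m yc.
set wb := map_mx Num.conj w.
have ycr : map_mx Num.conj yc = yc by apply/matrixP => i j; rewrite !mxE conj_rc.
have ywb : yc^T *m invmx P = wb^T.
  rewrite invmx_unitary // /wb /w map_mxM trmx_mul ycr map_trmx.
  by congr (_ *m _); apply/matrixP => i j; rewrite !mxE.
have rcE (M : 'M[R]_1) : rc (M 0 0) = (map_mx rc M) 0 0 by rewrite mxE.
rewrite -(lecR (dotv y (H *m y))) rmorphM /dotv /= !rcE !map_mxM -map_trmx -/yc -/Hc Hdec.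
have -> : yc^T *m yc = wb^T *m w.
  by rewrite -ywb /w -mulmxA (mulmxA (invmx P)) mulVmx // mul1mx.
have -> : yc^T *m (invmx P *m diag_mx D *m P *m yc) = wb^T *m diag_mx D *m w.
  by rewrite -ywb /w !mulmxA.
rewrite mul_mx_diag !mxE mulr_sumr; apply: ler_sum => i _; rewrite !mxE.
rewrite mulrAC [rc L * _]mulrC; apply: ler_wpM2l; last exact: Dle.
by rewrite mulrC mul_conjC_ge0.
Qed.
End Spec.


Section Dot.
Variable R : rcfType.
Variable d : nat.
Implicit Types a b c : 'cV[R]_d.

Lemma dotvE a b : dotv a b = \sum_i a i 0 * b i 0.
Proof. by rewrite /dotv mxE; apply: eq_bigr => i _; rewrite mxE. Qed.

Lemma dotvDl a b c : dotv (a + b) c = dotv a c + dotv b c.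
Proof. by rewrite !dotvE -big_split; apply: eq_bigr => i _; rewrite mxE mulrDl. Qed.
Lemma dotvC a b : dotv a b = dotv b a.
Proof. by rewrite !dotvE; apply: eq_bigr => i _; rewrite mulrC. Qed.
Lemma dotvDr a b c : dotv a (b + c) = dotv a b + dotv a c.
Proof. by rewrite dotvC dotvDl !(dotvC a). Qed.
Lemma dotvZl (k : R) a b : dotv (k *: a) b = k * dotv a b.
Proof. by rewrite !dotvE mulr_sumr; apply: eq_bigr => i _; rewrite mxE mulrA. Qed.
Lemma dotvZr (k : R) a b : dotv a (k *: b) = k * dotv a b.
Proof. by rewrite dotvC dotvZl dotvC. Qed.
Lemma dotvNl a b : dotv (- a) b = - dotv a b.
Proof. by rewrite -scaleN1r dotvZl mulN1r. Qed.
Lemma dotvNr a b : dotv a (- b) = - dotv a b.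
Proof. by rewrite -scaleN1r dotvZr mulN1r. Qed.
Lemma dotvBl a b c : dotv (a - b) c = dotv a c - dotv b c.
Proof. by rewrite dotvDl dotvNl. Qed.
Lemma dotvBr a b c : dotv a (b - c) = dotv a b - dotv a c.
Proof. by rewrite dotvDr dotvNr. Qed.
Lemma dotv0l b : dotv 0 b = 0.
Proof. by rewrite dotvE big1 // => i _; rewrite mxE mul0r. Qed.
Lemma dotv0r b : dotv b 0 = 0.
Proof. by rewrite dotvC dotv0l. Qed.
Lemma dotv_ge0 a : 0 <= dotv a a.
Proof. by rewrite dotvE; apply: sumr_ge0 => i _; rewrite -expr2 sqr_ge0. Qed.
Lemma dotv_gt0 a : a != 0 -> 0 < dotv a a.
Proof.
move=> a0; rewrite lt_def dotv_ge0 andbT; apply: contra a0 => /eqP.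
rewrite dotvE => /eqP; rewrite psumr_eq0 => [/allP H0|i _]; last by rewrite -expr2 sqr_ge0.
apply/eqP/matrixP => i j; rewrite (ord1 j) mxE.
have := H0 i (mem_index_enum i); rewrite /= -expr2 sqrf_eq0 => /eqP //.
Qed.

Variable H : 'M[R]_d.
Hypothesis Hsym : H^T = H.
Lemma dotvHl a b : dotv (H *m a) b = dotv a (H *m b).
Proof. by rewrite /dotv trmx_mul Hsym mulmxA. Qed.
Lemma dotvC1 a b : dotv a (H *m b) = dotv b (H *m a).
Proof. by rewrite dotvC dotvHl. Qed.
Lemma dotvC2 a b : dotv a (H *m (H *m b)) = dotv b (H *m (H *m a)).
Proof. by rewrite dotvC !dotvHl. Qed.
Lemma dotvC3 a b : dotv a (H *m (H *m (H *m b))) = dotv b (H *m (H *m (H *m a))).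
Proof. by rewrite dotvC !dotvHl. Qed.
End Dot.

Ltac vexpand Hsym :=
  repeat progress (rewrite ?(mulmxDr, mulmxBr, mulmxN, mulmx0) -?scalemxAr);
  rewrite ?(dotvDl, dotvDr, dotvBl, dotvBr, dotvNl, dotvNr, dotvZl, dotvZr, dotv0l, dotv0r);
  rewrite ?(dotvHl Hsym).

Ltac vsym Hsym a b :=
  rewrite ?(dotvC a b) ?(dotvC1 Hsym a b) ?(dotvC2 Hsym a b) ?(dotvC3 Hsym a b).

Section Quad.
Variable R : rcfType.
Variable d : nat.
Variable H : 'M[R]_d.
Variable L : R.
Hypothesis Hsym : H^T = H.
Hypothesis Hpsd : forall y, 0 <= dotv y (H *m y).
Hypothesis HF1 : forall y, dotv y (H *m y) <= L * dotv y y.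
Hypothesis Lpos : 0 < L.

Lemma F2 y : dotv (H *m y) (H *m y) <= L * dotv y (H *m y).
Proof.
have h := Hpsd (y - L^-1 *: (H *m y)).
have hc := HF1 (H *m y).
move: h hc; vexpand Hsym; move=> h hc.
set a := dotv y (H *m y) in h *.
set b := dotv y (H *m (H *m y)) in h hc *.
set c := dotv y (H *m (H *m (H *m y))) in h hc *.
have L0 : L != 0 by rewrite gt_eqF.
have h1 := mulr_ge0 (ltW Lpos) h.
have e : L * (a - L^-1 * b + (- (L^-1 * b) - - (L^-1 * (L^-1 * c))))
   = L * a - 2 * b + L^-1 * c by field.
have h2 : L^-1 * c <= L^-1 * (L * b) by rewrite ler_pM2l ?invr_gt0.
have e2 : L^-1 * (L * b) = b by field.
rewrite e in h1; rewrite e2 in h2; lra.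
Qed.

Definition Iform (al be : R) (u X : 'cV[R]_d) :=
  dotv u u + al * dotv X (H *m X) + al * dotv X (H *m u)
  + al * be * dotv X (H *m (H *m u)).

Definition Zv (al be s : R) (v X : 'cV[R]_d) :=
  (2 * s) *: (v - be *: (H *m v) - al *: (H *m X)) + (s * al) *: (H *m X)
  + (s * al * be) *: (H *m (H *m X)).

Lemma lyap_step (al be s : R) (v X xi : 'cV[R]_d) :
  0 <= al -> al * L <= 1 -> 0 <= be -> be * L <= 1 ->
  Iform al be (v - be *: (H *m v) - al *: (H *m X) + s *: xi) X <=
  Iform al be v (X - v) + dotv (Zv al be s v X) xi + s ^+ 2 * dotv xi xi.
Proof.
move=> al0 alL be0 beL.
set y := al *: (H *m X) - 2^-1 *: (v - be *: (H *m v)).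
have T1 := Hpsd y.
have hv := F2 v.
have hv0 := Hpsd v.
have T4 := HF1 (H *m v).
have T2 : al * dotv (H *m v) (H *m v) <= dotv v (H *m v).
  apply: (le_trans (ler_wpM2l al0 hv)); rewrite mulrA.
  by rewrite -[X in _ <= X]mul1r ler_wpM2r.
have T3 : be * dotv (H *m v) (H *m v) <= dotv v (H *m v).
  apply: (le_trans (ler_wpM2l be0 hv)); rewrite mulrA.
  by rewrite -[X in _ <= X]mul1r ler_wpM2r.
have be1 : 0 <= be ^+ 2 by rewrite sqr_ge0.
have T4' : 0 <= be ^+ 2 * (dotv (H *m v) (H *m v) - be * dotv (H *m v) (H *m (H *m v))).
  rewrite mulr_ge0 // subr_ge0.
  apply: (le_trans (ler_wpM2l be0 T4)); rewrite mulrA.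
  by rewrite -[X in _ <= X]mul1r ler_wpM2r // dotv_ge0.
have T1' := mulr_ge0 be0 T1.
have T2' : 0 <= be * (dotv v (H *m v) - al * dotv (H *m v) (H *m v)) by rewrite mulr_ge0 // subr_ge0.
have T3' : 0 <= be * (dotv v (H *m v) - be * dotv (H *m v) (H *m v)) by rewrite mulr_ge0 // subr_ge0.
move: T1' T2' T3' T4'.
rewrite /Iform /Zv /y; vexpand Hsym.
vsym Hsym X v; vsym Hsym xi v; vsym Hsym xi X.
move=> S1 S2 S3 S4.
lra.
Qed.

Lemma lyap_lower (al be : R) (u X : 'cV[R]_d) :
  0 <= al -> al * L <= 1 -> 0 <= be -> be * L <= 1 ->
  3 / 4 * (al * dotv (X + u) (H *m (X + u))) <= Iform al be u X.
Proof.
move=> al0 alL be0 beL.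
set y := 2^-1 *: (X + u) - (u - be *: (H *m u)).
have T1 := mulr_ge0 al0 (Hpsd y).
have T2 : al * dotv u (H *m u) <= dotv u u.
  apply: (le_trans (ler_wpM2l al0 (HF1 u))); rewrite mulrA.
  by rewrite -[X in _ <= X]mul1r ler_wpM2r // dotv_ge0.
have T3 : 0 <= al * be * (dotv (H *m u) (H *m u) - be * dotv (H *m u) (H *m (H *m u))).
  rewrite mulr_ge0 ?mulr_ge0 // subr_ge0.
  apply: (le_trans (ler_wpM2l be0 (HF1 (H *m u)))); rewrite mulrA.
  by rewrite -[X in _ <= X]mul1r ler_wpM2r // dotv_ge0.
move: T1 T2 T3.
rewrite /Iform /y; vexpand Hsym.
vsym Hsym X u.
move=> S1 S2 S3.
lra.
Qed.

End Quad.

Lemma step_rec (R : rcfType) d (H : 'M[R]_d) (al be : R) (n : nat) (ts tn tn1 xi : 'cV[R]_d) :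
  (n%:R + 1) *: (noisy_step H ts al be n tn tn1 xi - ts) - n%:R *: (tn - ts) =
  (n%:R *: (tn - ts) - (n%:R - 1) *: (tn1 - ts))
  - be *: (H *m (n%:R *: (tn - ts) - (n%:R - 1) *: (tn1 - ts)))
  - al *: (H *m (n%:R *: (tn - ts))) + (n%:R * al + be) *: xi.
Proof.
rewrite /noisy_step.
repeat progress (rewrite ?(mulmxDr, mulmxBr, mulmxN, mulmx0) -?scalemxAr).
move: (H *m tn) (H *m tn1) (H *m ts) => a b c.
have n0 : (n%:R + 1 : R) != 0 by rewrite natr1 pnatr_eq0.
apply/matrixP => i j; rewrite !mxE.
by field.
Qed.


Section Prob.
Variable R : rcfType.
Variable Omega : Type.
Variable P : ExpSpace R Omega.

Lemma Int_ext (F G : Omega -> R) : (forall w, F w = G w) -> Int P F -> Int P G.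
Proof. by move=> e; rewrite (functional_extensionality F G e). Qed.
Lemma Ex_ext (F G : Omega -> R) : (forall w, F w = G w) -> Ex P F = Ex P G.
Proof. by move=> e; rewrite (functional_extensionality F G e). Qed.

Lemma Int_opp F : Int P F -> Int P (fun w => - F w).
Proof. by move=> h; apply: Int_ext (Int_scale (-1) h) => w; rewrite mulN1r. Qed.
Lemma Ex_opp F : Int P F -> Ex P (fun w => - F w) = - Ex P F.
Proof.
move=> h; rewrite -(Ex_ext (fun w => mulN1r (F w))) Ex_scale // mulN1r //.
Qed.
Lemma Int_sub F G : Int P F -> Int P G -> Int P (fun w => F w - G w).
Proof. by move=> hF hG; apply: Int_add hF (Int_opp hG). Qed.
Lemma Ex_sub F G : Int P F -> Int P G -> Ex P (fun w => F w - G w) = Ex P F - Ex P G.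
Proof. by move=> hF hG; rewrite Ex_add ?Ex_opp //; apply: Int_opp. Qed.
Lemma Ex_le F G : Int P F -> Int P G -> (forall w, F w <= G w) -> Ex P F <= Ex P G.
Proof.
move=> hF hG hle; rewrite -subr_ge0 -Ex_sub //; apply: Ex_pos.
  exact: Int_sub.
by move=> w; rewrite subr_ge0.
Qed.

Lemma Int_sum (I : eqType) (r : seq I) (F : I -> Omega -> R) :
  (forall i, i \in r -> Int P (F i)) -> Int P (fun w => \sum_(i <- r) F i w).
Proof.
elim: r => [|x r IH] Hr.
  by apply: Int_ext (Int_const P 0) => w; rewrite big_nil.
apply: Int_ext (Int_add (Hr x (mem_head _ _)) (IH _)) => [w|i ir].
  by rewrite big_cons.
by apply: Hr; rewrite in_cons ir orbT.
Qed.

Lemma Ex_sum (I : eqType) (r : seq I) (F : I -> Omega -> R) :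
  (forall i, i \in r -> Int P (F i)) ->
  Ex P (fun w => \sum_(i <- r) F i w) = \sum_(i <- r) Ex P (F i).
Proof.
elim: r => [|x r IH] Hr.
  by rewrite (Ex_ext (fun w => big_nil _ _ _ _)) Ex_const big_nil.
have Hr' : forall i, i \in r -> Int P (F i).
  by move=> i ir; apply: Hr; rewrite in_cons ir orbT.
rewrite (Ex_ext (fun w => big_cons _ _ _ _ _ _)) Ex_add ?IH ?big_cons //.
  exact: Hr (mem_head _ _).
exact: Int_sum.
Qed.

Variable d : nat.
Variable eps : nat -> Omega -> 'cV[R]_d.
Variable C : 'M[R]_d.
Hypothesis hI1 : forall n (i : 'I_d), (2 <= n)%N -> Int P (fun w => eps n w i 0).
Hypothesis hI2 : forall n m (i j : 'I_d), (2 <= n)%N -> (2 <= m)%N ->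
     Int P (fun w => eps n w i 0 * eps m w j 0).
Hypothesis hE1 : forall n (i : 'I_d), (2 <= n)%N -> Ex P (fun w => eps n w i 0) = 0.
Hypothesis hE2 : forall n m (i j : 'I_d), (2 <= n)%N -> (2 <= m)%N -> n <> m ->
     Ex P (fun w => eps n w i 0 * eps m w j 0) = 0.
Hypothesis hC : forall n (i j : 'I_d), (2 <= n)%N ->
     Ex P (fun w => eps n w i 0 * eps n w j 0) = C i j.

Definition LinR (k : nat) (F : Omega -> R) := exists c0 : R, exists a : nat -> 'I_d -> R,
  forall w, F w = c0 + \sum_(2 <= j < k) \sum_l a j l * eps j w l 0.

Lemma LinR_Int k F : LinR k F -> Int P F.
Proof.
move=> [c0 [a e]]; apply: Int_ext (Int_add (Int_const P c0) (Int_sum _)) => [w|j].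
  by rewrite e.
rewrite mem_index_iota => /andP[j2 _].
by apply: Int_sum => l _; apply: Int_scale; apply: hI1.
Qed.

Lemma Int_eps_mul k j l G : (2 <= j)%N -> LinR k G -> Int P (fun w => eps j w l 0 * G w).
Proof.
move=> j2 [c0 [a e]].
apply: (@Int_ext (fun w => c0 * eps j w l 0 +
   \sum_(2 <= j' < k) \sum_l' a j' l' * (eps j w l 0 * eps j' w l' 0))).
  move=> w; rewrite e mulrDr mulr_sumr [_ * c0]mulrC; congr (_ + _).
  by apply: eq_bigr => j'' _; rewrite mulr_sumr; apply: eq_bigr => l' _; rewrite mulrCA.
apply: Int_add; first exact: Int_scale (hI1 l j2).
apply: Int_sum => j'; rewrite mem_index_iota => /andP[j'2 _].
by apply: Int_sum => l' _; apply: Int_scale; apply: hI2.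
Qed.

Lemma Int_LinR_mul k k' F G : LinR k F -> LinR k' G -> Int P (fun w => F w * G w).
Proof.
move=> [c0 [a e]] hG.
apply: (@Int_ext (fun w => c0 * G w +
   \sum_(2 <= j < k) \sum_l a j l * (eps j w l 0 * G w))).
  move=> w; rewrite e mulrDl mulr_suml; congr (_ + _).
  by apply: eq_bigr => j'' _; rewrite mulr_suml; apply: eq_bigr => l' _; rewrite mulrA.
apply: Int_add; first exact: Int_scale (LinR_Int hG).
apply: Int_sum => j; rewrite mem_index_iota => /andP[j2 _].
by apply: Int_sum => l _; apply: Int_scale; apply: Int_eps_mul hG.
Qed.

Lemma Ex_LinR_eps m G (i : 'I_d) : (2 <= m)%N -> LinR m G ->
  Ex P (fun w => G w * eps m w i 0) = 0.
Proof.
move=> m2 [c0 [a e]].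
have hG : LinR m G by exists c0, a.
rewrite (Ex_ext (G := fun w => c0 * eps m w i 0 +
    \sum_(2 <= j < m) \sum_l a j l * (eps j w l 0 * eps m w i 0))); last first.
  move=> w; rewrite e mulrDl mulr_suml; congr (_ + _).
  by apply: eq_bigr => j _; rewrite mulr_suml; apply: eq_bigr => l _; rewrite mulrA.
have hsum : forall j, j \in index_iota 2 m ->
    Int P (fun w => \sum_l a j l * (eps j w l 0 * eps m w i 0)).
  move=> j; rewrite mem_index_iota => /andP[j2 _].
  by apply: Int_sum => l _; apply: Int_scale; apply: hI2.
rewrite Ex_add; last 2 first.
- exact: Int_scale (hI1 i m2).
- exact: Int_sum.
rewrite Ex_scale; last exact: hI1.
rewrite hE1 // mulr0 add0r Ex_sum //.
apply: big1_seq => j /andP[_]; rewrite mem_index_iota => /andP[j2 jm].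
rewrite Ex_sum => [|l _]; last by apply: Int_scale; apply: hI2.
apply: big1 => l _; rewrite Ex_scale ?hE2 ?mulr0 //; last by apply: hI2.
by move=> ejm; rewrite ejm ltnn in jm.
Qed.

Definition Aff (k : nat) (Y : Omega -> 'cV[R]_d) :=
  exists c : 'cV[R]_d, exists M : nat -> 'M[R]_d,
  forall w, Y w = c + \sum_(2 <= j < k) M j *m eps j w.

Lemma Aff_LinR k Y i : Aff k Y -> LinR k (fun w => Y w i 0).
Proof.
move=> [c [M e]]; exists (c i 0), (fun j l => M j i l) => w.
rewrite e mxE summxE; congr (_ + _); apply: eq_bigr => j _; rewrite mxE.
by [].
Qed.

Lemma Int_dot k k' Y Z : Aff k Y -> Aff k' Z -> Int P (fun w => dotv (Y w) (Z w)).
Proof.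
move=> hY hZ; apply: (@Int_ext (fun w => \sum_i Y w i 0 * Z w i 0)) => [w|].
  by rewrite dotvE.
by apply: Int_sum => i _; exact: (Int_LinR_mul (Aff_LinR i hY) (Aff_LinR i hZ)).
Qed.

Lemma Ex_dot_eps m Y : (2 <= m)%N -> Aff m Y -> Ex P (fun w => dotv (Y w) (eps m w)) = 0.
Proof.
move=> m2 hY.
rewrite (@Ex_ext _ (fun w => \sum_i Y w i 0 * eps m w i 0)); last by move=> w; rewrite dotvE.
rewrite Ex_sum => [|i _]; last first.
  apply: (@Int_ext (fun w => eps m w i 0 * Y w i 0)) => [w|]; first by rewrite mulrC.
  by apply: Int_eps_mul => //; apply: Aff_LinR hY.
by apply: big1 => i _; apply: Ex_LinR_eps => //; apply: Aff_LinR.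
Qed.

Lemma Ex_eps_norm m : (2 <= m)%N -> Ex P (fun w => dotv (eps m w) (eps m w)) = \tr C.
Proof.
move=> m2.
rewrite (@Ex_ext _ (fun w => \sum_i eps m w i 0 * eps m w i 0)); last by move=> w; rewrite dotvE.
rewrite Ex_sum => [|i _]; last exact: hI2.
by apply: eq_bigr => i _; rewrite hC.
Qed.

Lemma Int_eps_norm m : (2 <= m)%N -> Int P (fun w => dotv (eps m w) (eps m w)).
Proof.
move=> m2; apply: (@Int_ext (fun w => \sum_i eps m w i 0 * eps m w i 0)) => [w|].
  by rewrite dotvE.
by apply: Int_sum => i _; apply: hI2.
Qed.

Lemma Aff_ext k Y Z : (forall w, Y w = Z w) -> Aff k Y -> Aff k Z.
Proof. by move=> e [c [M h]]; exists c, M => w; rewrite -e h. Qed.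

Lemma Aff_const k c : Aff k (fun _ => c).
Proof.
exists c, (fun _ => 0) => w; rewrite big1 ?addr0 // => j _; exact: mul0mx.
Qed.

Lemma Aff_add k Y Z : Aff k Y -> Aff k Z -> Aff k (fun w => Y w + Z w).
Proof.
move=> [c [M e]] [c' [M' e']]; exists (c + c'), (fun j => M j + M' j) => w.
rewrite e e' addrACA; congr (_ + _); rewrite -big_split; apply: eq_bigr => j _.
by rewrite mulmxDl.
Qed.

Lemma Aff_scale k (a : R) Y : Aff k Y -> Aff k (fun w => a *: Y w).
Proof.
move=> [c [M e]]; exists (a *: c), (fun j => a *: M j) => w.
rewrite e scalerDr scaler_sumr; congr (_ + _); apply: eq_bigr => j _.
by rewrite scalemxAl.
Qed.

Lemma Aff_mul k (A : 'M[R]_d) Y : Aff k Y -> Aff k (fun w => A *m Y w).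
Proof.
move=> [c [M e]]; exists (A *m c), (fun j => A *m M j) => w.
rewrite e mulmxDr mulmx_sumr; congr (_ + _); apply: eq_bigr => j _.
by rewrite mulmxA.
Qed.

Lemma Aff_sub k Y Z : Aff k Y -> Aff k Z -> Aff k (fun w => Y w - Z w).
Proof.
move=> hY hZ; apply: Aff_add hY _.
by apply: Aff_ext (Aff_scale (-1) hZ) => w; rewrite scaleN1r.
Qed.

Lemma Aff_mono k k' Y : (k <= k')%N -> Aff k Y -> Aff k' Y.
Proof.
move=> kk [c [M e]]; exists c, (fun j => if (j < k)%N then M j else 0) => w.
rewrite e (big_nat_widen _ _ _ _ _ kk) big_mkcond /=; congr (_ + _).
by apply: eq_bigr => j _; case: ifP => // _; rewrite mul0mx.
Qed.

Lemma Aff_eps m : (2 <= m)%N -> Aff m.+1 (fun w => eps m w).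
Proof.
move=> m2; exists 0, (fun j => if j == m then 1%:M else 0) => w.
rewrite add0r big_nat_recr //= eqxx mul1mx big1_seq ?add0r // => j /andP[_].
by rewrite mem_index_iota => /andP[_ jm]; rewrite (ltn_eqF jm) mul0mx.
Qed.

End Prob.


Lemma final_num (R : rcfType) (r S t L alpha : R) :
  0 < r -> 0 < S -> 0 < t -> 1 <= t ^+ 2 -> 0 < L ->
  alpha = Num.min (r / (2 * S * (t ^+ 2 * t))) L^-1 ->
  2 / (3 * alpha * (t ^+ 2) ^+ 2) * (r ^+ 2 + (t ^+ 2 - 1) * (S ^+ 2 * (2 * t ^+ 2 * alpha) ^+ 2))
  <= 2 * L * r ^+ 2 / (t ^+ 2) ^+ 2 + 4 * S * r / t.
Proof.
move=> r0 S0 t0 t1 L0 ->.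
set A := r / (2 * S * (t ^+ 2 * t)).
have A0 : 0 < A by rewrite /A divr_gt0 // !mulr_gt0 // exprn_gt0.
set al := Num.min A L^-1.
have al0 : 0 < al by rewrite /al lt_min A0 invr_gt0.
have alA : al <= A by rewrite /al ge_min lexx.
have ia : al^-1 <= L + A^-1.
  have iA : 0 < A^-1 by rewrite invr_gt0.
  rewrite /al; case: (leP A L^-1) => h.
    lra.
  rewrite invrK; lra.
have tn0 : t != 0 by rewrite gt_eqF.
have rn0 : r != 0 by rewrite gt_eqF.
have Sn0 : S != 0 by rewrite gt_eqF.
have aln0 : al != 0 by rewrite gt_eqF.
have e : 2 / (3 * al * (t ^+ 2) ^+ 2) * (r ^+ 2 + (t ^+ 2 - 1) * (S ^+ 2 * (2 * t ^+ 2 * al) ^+ 2))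
   = (2 * r ^+ 2 / (3 * (t ^+ 2) ^+ 2)) * al^-1 + (8 / 3 * (t ^+ 2 - 1) * S ^+ 2) * al.
  by field; rewrite ?aln0 ?tn0 ?rn0 ?Sn0.
rewrite e.
have c1 : 0 <= 2 * r ^+ 2 / (3 * (t ^+ 2) ^+ 2).
  apply: divr_ge0; first by apply: mulr_ge0 => //; exact: sqr_ge0.
  by apply: mulr_ge0 => //; apply: exprn_ge0; exact: sqr_ge0.
have c2 : 0 <= 8 / 3 * (t ^+ 2 - 1) * S ^+ 2.
  apply: mulr_ge0; last exact: sqr_ge0.
  by apply: mulr_ge0; [rewrite divr_ge0 | rewrite subr_ge0].
have h1 := ler_wpM2l c1 ia.
have h2 := ler_wpM2l c2 alA.
have e1 : 2 * r ^+ 2 / (3 * (t ^+ 2) ^+ 2) * (L + A^-1) =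
   2 / 3 * (L * r ^+ 2 / (t ^+ 2) ^+ 2) + 4 / 3 * (S * r / t).
  by rewrite /A; field; rewrite ?aln0 ?tn0 ?rn0 ?Sn0.
have e2 : 8 / 3 * (t ^+ 2 - 1) * S ^+ 2 * A = 4 / 3 * (S * r / t) - 4 / 3 * (S * r / (t ^+ 2 * t)).
  by rewrite /A; field; rewrite ?aln0 ?tn0 ?rn0 ?Sn0.
rewrite e1 in h1; rewrite e2 in h2.
have p1 : 0 <= L * r ^+ 2 / (t ^+ 2) ^+ 2.
  apply: divr_ge0; first by apply: mulr_ge0; [exact: ltW | exact: sqr_ge0].
  by apply: exprn_ge0; exact: sqr_ge0.
have p2 : 0 <= S * r / (t ^+ 2 * t).
  apply: divr_ge0; first by apply: mulr_ge0; exact: ltW.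
  by apply: mulr_ge0; [exact: sqr_ge0 | exact: ltW].
have q1 : 2 * L * r ^+ 2 / (t ^+ 2) ^+ 2 = 2 * (L * r ^+ 2 / (t ^+ 2) ^+ 2) by rewrite !mulrA.
have q2 : 4 * S * r / t = 4 * (S * r / t) by rewrite !mulrA.
rewrite q1 q2.
have p3 : 0 <= S * r / t by rewrite divr_ge0 ?mulr_ge0 ?ltW.
lra.
Qed.


Unset Implicit Arguments.

Theorem corollary2 (R : rcfType) (d : nat) (H : 'M[R]_d) (L : R) (q : 'cV[R]_d)
  (Omega : Type) (P : ExpSpace R Omega) (eps : nat -> Omega -> 'cV[R]_d)
  (C : 'M[R]_d) (theta0 : 'cV[R]_d) (N : nat) (beta : R) :
  (* H symmetric positive definite with largest eigenvalue L *)
  H^T = H ->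
  (forall u : 'cV[R]_d, u != 0 -> 0 < dotv u (H *m u)) ->
  eigenvalue H L ->
  (forall a : R, eigenvalue H a -> a <= L) ->
  (* noise: integrability of first and second moments *)
  (forall n (i : 'I_d), (2 <= n)%N -> Int P (fun w => eps n w i 0)) ->
  (forall n m (i j : 'I_d), (2 <= n)%N -> (2 <= m)%N ->
     Int P (fun w => eps n w i 0 * eps m w j 0)) ->
  (* E eps_n = 0, uncorrelated, covariance C *)
  (forall n (i : 'I_d), (2 <= n)%N -> Ex P (fun w => eps n w i 0) = 0) ->
  (forall n m (i j : 'I_d), (2 <= n)%N -> (2 <= m)%N -> n <> m ->
     Ex P (fun w => eps n w i 0 * eps m w j 0) = 0) ->
  (forall n (i j : 'I_d), (2 <= n)%N ->
     Ex P (fun w => eps n w i 0 * eps n w j 0) = C i j) ->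
  0 < \tr C ->
  theta0 != thstar H q ->
  (1 <= N)%N ->
  let alpha := Num.min
      (normv (theta0 - thstar H q) /
         (2 * Num.sqrt (\tr C) * (N%:R * Num.sqrt N%:R))) L^-1 in
  0 <= beta -> beta <= Num.min (N%:R * alpha) L^-1 ->
  Ex P (fun w => quadf H q (noisy_iter H q alpha beta eps theta0 N w))
    - quadf H q (thstar H q)
  <= 2 * L * normv (theta0 - thstar H q) ^+ 2 / N%:R ^+ 2
     + 4 * Num.sqrt (\tr C) * normv (theta0 - thstar H q) / Num.sqrt N%:R.
Proof.
move=> Hsym Hpd HLe HLmax hI1 hI2 hE1 hE2 hC trC0 th0 N1 alpha be0 beN.
have Hpsd : forall y, 0 <= dotv y (H *m y).
  move=> y; case: (eqVneq y 0) => [->|y0]; first by rewrite mulmx0 dotv0r.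
  exact: ltW (Hpd y y0).
have Lpos : 0 < L.
  case/eigenvalueP: HLe => v vH v0.
  have Hu : H *m v^T = L *: v^T by rewrite -{1}Hsym -trmx_mul vH linearZ.
  have vT0 : v^T != 0 by rewrite trmx_eq0.
  have := Hpd _ vT0; rewrite Hu dotvZr => h.
  by rewrite -(pmulr_lgt0 _ (dotv_gt0 vT0)).
have HF1 := @rayleigh_le _ _ _ _ Hsym HLmax.
have Hunit : H \in unitmx.
  rewrite unitmxE unitfE; apply/negP => /det0P [v v0 vH].
  have vT0 : v^T != 0 by rewrite trmx_eq0.
  by have := Hpd _ vT0; rewrite -{1}Hsym -trmx_mul vH trmx0 dotv0r ltxx.
have Hts : H *m thstar H q = q by rewrite /thstar mulKVmx.
set ts := thstar H q in th0 Hts *.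
set e0 := theta0 - ts.
have e0n : e0 != 0 by rewrite subr_eq0.
set r := normv e0.
have r2 : r ^+ 2 = dotv e0 e0 by rewrite /r /normv sqr_sqrtr // dotv_ge0.
have r0 : 0 < r by rewrite /r /normv sqrtr_gt0 dotv_gt0.
set S := Num.sqrt (\tr C).
have S0 : 0 < S by rewrite sqrtr_gt0.
have S2 : S ^+ 2 = \tr C by rewrite sqr_sqrtr // ltW.
set t := Num.sqrt N%:R.
have t0 : 0 < t by rewrite sqrtr_gt0 ltr0n.
have t2 : t ^+ 2 = N%:R by rewrite sqr_sqrtr // ler0n.
have alE : alpha = Num.min (r / (2 * S * (t ^+ 2 * t))) L^-1 by rewrite /alpha t2.
have alLi : alpha <= L^-1 by rewrite /alpha ge_min lexx orbT.
have al0 : 0 < alpha.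
  rewrite alE lt_min invr_gt0 Lpos andbT divr_gt0 // !mulr_gt0 //.
have alL : alpha * L <= 1.
  by rewrite -(mulVf (lt0r_neq0 Lpos)) ler_wpM2r // ltW.
have beLi : beta <= L^-1 by move: beN; rewrite le_min => /andP[].
have beNa : beta <= N%:R * alpha by move: beN; rewrite le_min => /andP[].
have beL : beta * L <= 1.
  by rewrite -(mulVf (lt0r_neq0 Lpos)) ler_wpM2r // ltW.
pose th k w := noisy_iter H q alpha beta eps theta0 k w.
pose X k w := k%:R *: (th k w - ts).
pose U k w := X k.+1 w - X k w.
pose I k w := Iform H alpha beta (U k w) (X k w).
pose s k := k%:R * alpha + beta.
have th_step : forall k w, th k.+2 w =
    noisy_step H ts alpha beta k.+1 (th k.+1 w) (th k w) (eps k.+2 w) by [].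
have Ath : forall k, Aff eps k.+1 (th k) /\ Aff eps k.+2 (th k.+1).
  elim=> [|k [IH1 IH2]].
    by split; apply: Aff_ext (Aff_const eps _ theta0) => w.
  split => //.
  apply: Aff_ext (fun w => esym (th_step k w)) _; rewrite /noisy_step.
  repeat first [ apply: Aff_sub | apply: Aff_add | apply: Aff_scale
               | apply: Aff_mul | apply: Aff_const ].
  all: try (first [exact: (Aff_mono (leqnSn _) IH2) | exact: (Aff_mono (leqW (leqnSn _)) IH1) | exact: (Aff_eps eps (isT : (2 <= k.+2)%N))]).
have AX : forall k, Aff eps k.+1 (X k).
  move=> k; apply: Aff_scale; apply: Aff_sub; [exact: (Ath k).1 | exact: Aff_const].
have AU : forall k, Aff eps k.+2 (U k).
  move=> k; apply: Aff_sub; [exact: AX | exact: (Aff_mono (leqnSn _) (AX k))].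
have Urec : forall m w, U m.+1 w = U m w - beta *: (H *m U m w)
    - alpha *: (H *m X m.+1 w) + s m.+1 *: eps m.+2 w.
  move=> m w.
  have e2 : ((m.+2)%:R : R) = (m.+1)%:R + 1 by rewrite natr1.
  have e0' : ((m)%:R : R) = (m.+1)%:R - 1 by rewrite -natr1 addrK.
  rewrite /U /X th_step e2 e0'.
  exact: step_rec.
have Ipath : forall m w, I m.+1 w <= I m w
    + dotv (Zv H alpha beta (s m.+1) (U m w) (X m.+1 w)) (eps m.+2 w)
    + s m.+1 ^+ 2 * dotv (eps m.+2 w) (eps m.+2 w).
  move=> m w; rewrite /I Urec.
  have := lyap_step Hsym Hpsd HF1 Lpos (s m.+1) (U m w) (X m.+1 w) (eps m.+2 w)
    (ltW al0) alL be0 beL.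
  by have -> : X m.+1 w - U m w = X m w by rewrite /U opprB addrC subrK.
have IntI : forall k, Int P (I k).
  move=> k; have hU := AU k; have hX := Aff_mono (leqnSn _) (AX k).
  rewrite /I /Iform.
  apply: Int_add; first apply: Int_add; first apply: Int_add.
  - exact (Int_dot hI1 hI2 hU hU).
  - apply: Int_scale; exact (Int_dot hI1 hI2 hX (Aff_mul H hX)).
  - apply: Int_scale; exact (Int_dot hI1 hI2 hX (Aff_mul H hU)).
  - apply: Int_scale; exact (Int_dot hI1 hI2 hX (Aff_mul H (Aff_mul H hU))).
have Estep : forall m, Ex P (I m.+1) <= Ex P (I m) + s m.+1 ^+ 2 * \tr C.
  move=> m.
  have hZ : Aff eps m.+2 (fun w => Zv H alpha beta (s m.+1) (U m w) (X m.+1 w)).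
    rewrite /Zv.
    repeat first [ exact (AU m) | exact (AX m.+1) | apply: Aff_sub | apply: Aff_add
                 | apply: Aff_scale | apply: Aff_mul ].
  have hIm := IntI m.
  have hIm1 := IntI m.+1.
  have hdot := Int_dot hI1 hI2 hZ (Aff_eps eps (isT : (2 <= m.+2)%N)).
  have hnorm := Int_eps_norm hI2 (isT : (2 <= m.+2)%N).
  have hG := Int_add (Int_add hIm hdot) (Int_scale (s m.+1 ^+ 2) hnorm).
  apply: (le_trans (Ex_le hIm1 hG (Ipath m))).
  rewrite (Ex_add (Int_add hIm hdot) (Int_scale _ hnorm)) (Ex_add hIm hdot).
  rewrite (Ex_scale _ hnorm) (Ex_dot_eps hI1 hI2 hE1 hE2 (isT : (2 <= m.+2)%N) hZ).
  by rewrite (Ex_eps_norm hI2 hC (isT : (2 <= m.+2)%N)) addr0.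
set B := \tr C * (2 * N%:R * alpha) ^+ 2.
have Ebound : forall m, (m < N)%N -> Ex P (I m) <= dotv e0 e0 + m%:R * B.
  elim=> [|m IH] hm.
    rewrite mul0r addr0 (@Ex_ext _ _ _ _ (fun _ => dotv e0 e0)) ?Ex_const //.
    move=> w; rewrite /I /U /X /Iform /= scale0r scale1r subr0 !dotv0l.
    by rewrite !mulr0 !addr0.
  have IHm := IH (ltnW hm).
  have hs0 : 0 <= s m.+1 by rewrite /s addr_ge0 // mulr_ge0 // ltW.
  have hs1 : s m.+1 <= 2 * N%:R * alpha.
    have h1 : m.+1%:R * alpha <= N%:R * alpha by apply: ler_wpM2r; [exact: ltW | rewrite ler_nat ltnW].
    rewrite /s; lra.
  have hs2 : s m.+1 ^+ 2 <= (2 * N%:R * alpha) ^+ 2 by rewrite !expr2 ler_pM.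
  have hB : s m.+1 ^+ 2 * \tr C <= B by rewrite /B mulrC ler_wpM2l // ltW.
  have := Estep m.
  rewrite -natr1 mulrDl mul1r; lra.
have quadE : forall x, quadf H q x - quadf H q ts = 2^-1 * dotv (x - ts) (H *m (x - ts)).
  move=> x; rewrite /quadf -Hts.
  vexpand Hsym; vsym Hsym x ts.
  by field.
set M := N.-1.
have NM : M.+1 = N := prednK N1.
have cpos : 0 <= 2 / (3 * alpha * N%:R ^+ 2).
  by rewrite divr_ge0 // mulr_ge0 // ?sqr_ge0 // mulr_ge0 // ltW.
have fin_path : forall w, quadf H q (noisy_iter H q alpha beta eps theta0 N w)
    - quadf H q ts <= 2 / (3 * alpha * N%:R ^+ 2) * I M w.
  move=> w.
  have lo := lyap_lower Hsym Hpsd HF1 (U M w) (X M w) (ltW al0) alL be0 beL.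
  rewrite (_ : X M w + U M w = N%:R *: (th N w - ts)) in lo; last first.
    by rewrite /U addrC subrK NM.
  rewrite (quadE (th N w)).
  move: lo; move: (th N w - ts) => z.
  rewrite -scalemxAr dotvZl dotvZr => lo.
  have aln0 : alpha != 0 by rewrite lt0r_neq0.
  have Nn0 : (N%:R : R) != 0 by rewrite pnatr_eq0 -lt0n.
  have key : 2^-1 * dotv z (H *m z) = 2 / (3 * alpha * N%:R ^+ 2)
      * (3 / 4 * (alpha * (N%:R * (N%:R * dotv z (H *m z))))).
    by field; rewrite ?aln0 ?Nn0.
  by rewrite key; apply: ler_wpM2l lo.
have hA : Aff eps N.+1 (th N) := (Ath N).1.
have IntQ : Int P (fun w => quadf H q (noisy_iter H q alpha beta eps theta0 N w)).
  apply: (@Int_ext _ _ _ (fun w => 2^-1 * dotv (th N w) (H *m th N w) - dotv q (th N w))) => [w|] //.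
  apply: Int_sub; first by apply: Int_scale; exact (Int_dot hI1 hI2 hA (Aff_mul H hA)).
  exact (Int_dot hI1 hI2 (Aff_const eps N.+1 q) hA).
rewrite -[X in _ - X <= _](Ex_const P) -Ex_sub //; last exact: Int_const.
apply: le_trans (Ex_le (Int_sub IntQ (Int_const _ _)) (Int_scale _ (IntI M)) fin_path) _.
rewrite Ex_scale; last exact: IntI.
have MN : (M < N)%N by rewrite -NM.
apply: le_trans (ler_wpM2l cpos (Ebound M MN)) _.
have eM : (M%:R : R) = N%:R - 1 by rewrite -NM -natr1 addrK.
rewrite -r2 /B -S2 eM -t2.
apply: final_num => //.
by rewrite t2 ler1n.
Qed.
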